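(* Let $d\ge2$ and let $P$ be an essential pattern subgroup of $G(d)$ with $P(d-1)=G(d-1)$ and $[G(d):P]=4$. Then there exist $k_0,\ldots,k_{d-2}\in\{0,1,2,3\}$ such that $P$ is generated by $\{a_iz_{k_i}: 0\le i\le d-2\}\cup\{[a_1,a_{d-1}]\}$, where $z_0=\mathrm{id}$, $z_1=a_{d-1}$, $z_2=a_{d-1}^{a_0}$, $z_3=[a_0,a_{d-1}]$.
   Context: Let $X=\{0,1\}$, $X^*$ the rooted binary tree of finite words, $G(d)$ the automorphism group of the finite tree of words of length $\le d$; finite sections $g(wv)=g(w)g_w(v)$; $\pi_k$ restriction to words of length $\le k$, $P(k)=\pi_k(P)$. A subgroup $P\le G(d)$ is an essential pattern group if for every $p\in P$ and $i\in\{0,1\}$ there is $q\in P$ with $\pi_{d-1}(q)=p_i$. For $0\le i\le d-1$, $a_i\in G(d)$ swaps $0^i0w$ with $0^i1w$ for all words $w$ and fixes all other words. $[h,k]=h^{-1}k^{-1}hk$ and $h^k=k^{-1}hk$. *)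

(* Defs.v *)
From HB Require Import structures.
From mathcomp Require Import all_boot all_order all_fingroup.
Set Implicit Arguments. Unset Strict Implicit. Unset Printing Implicit Defensive.

(* Words over X = {0,1}: 0 = false, 1 = true. *)
Fixpoint words (n : nat) : seq (seq bool) :=
  if n is n'.+1 then [seq b :: w | b <- [:: false; true], w <- words n'] else [:: [::]].

Definition allwords (d : nat) : seq (seq bool) := flatten [seq words n | n <- iota 0 d.+1].

Lemma mem_words n w : (w \in words n) = (size w == n).
Proof.
elim: n w => [|n IH] w; first by case: w.
case: w => [|b w].
  by apply/flattenP => -[s /mapP [c _ ->] /mapP [w0 _]].
have Hm : forall c, (b :: w \in [seq c :: w0 | w0 <- words n]) = (c == b) && (w \in words n).
  move=> c; apply/mapP/andP => [[w0 Hw0 [-> ->]]|[/eqP -> Hw]]; first by [].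
  by exists w.
rewrite /= ?cats0 !mem_cat ?in_nil ?orbF !Hm IH eqSS; by case: (b) => /=; rewrite ?andbF ?orbF.
Qed.

Lemma mem_allwords d w : (w \in allwords d) = (size w <= d).
Proof.
apply/flattenP/idP => [[s /mapP [n Hn ->]]|Hw].
  rewrite mem_words => /eqP Hs; rewrite mem_iota add0n ltnS in Hn; by rewrite Hs.
exists (words (size w)); last by rewrite mem_words.
by apply/mapP; exists (size w) => //; rewrite mem_iota add0n ltnS.
Qed.

(* Vertices of the finite tree of words of length <= d. *)
Notation W d := (seq_sub (allwords d)).

(* The action of a permutation of W d on words (identity outside W d). *)
Definition gact d (g : {perm W d}) (w : seq bool) : seq bool :=
  if insub w is Some x then ssval (g x) else w.

Definition parent (w : seq bool) : seq bool := take (size w).-1 w.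

(* G(d): automorphisms of the rooted tree of words of length <= d, i.e.
   bijections preserving word length (hence the root) and the parent map. *)
Definition Gd (d : nat) : {set {perm W d}} :=
  [set g : {perm W d} | [forall x : W d,
     (size (ssval (g x)) == size (ssval x)) &&
     (gact g (parent (ssval x)) == parent (ssval (g x)))]].

(* a_i on words: swaps 0^i 0 w with 0^i 1 w, fixes all other words. *)
Definition aswap (i : nat) (w : seq bool) : seq bool :=
  if (take i w == nseq i false) && (i < size w)
  then set_nth false w i (~~ nth false w i) else w.

Lemma size_aswap i w : size (aswap i w) = size w.
Proof.
rewrite /aswap; case: ifP => // /andP [_ H].
by rewrite size_set_nth; apply/maxn_idPr.
Qed.

Lemma aswapK i : involutive (aswap i).
Proof.
move=> w; rewrite {2}/aswap; case: ifP => [/andP [H1 H2]|Hn]; last by rewrite /aswap Hn.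
rewrite /aswap.
have -> : take i (set_nth false w i (~~ nth false w i)) = take i w.
  apply: (@eq_from_nth _ false); first by rewrite !size_take size_set_nth (maxn_idPr H2).
  move=> j; rewrite size_take size_set_nth (maxn_idPr H2) H2 => Hj.
  by rewrite !nth_take // nth_set_nth /= (ltn_eqF Hj).
rewrite H1 size_set_nth (maxn_idPr H2) H2 /=.
rewrite nth_set_nth /= eqxx negbK.
apply: (@eq_from_nth _ false); first by rewrite !size_set_nth !(maxn_idPr H2).
move=> j _; rewrite !nth_set_nth /=; case: eqP => [->|/eqP/negbTE Hji] //; by rewrite nth_set_nth /= Hji.
Qed.

Definition aswapW d (i : nat) (x : W d) : W d :=
  SeqSub (ssval := aswap i (ssval x))
    (eq_ind_r (fun b => b = true) (ssvalP x)
      (etrans (mem_allwords d _) (etrans (congr1 (leq^~ d) (size_aswap i _))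
        (esym (mem_allwords d _))))).

Lemma aswapWK d i : involutive (@aswapW d i).
Proof. by move=> x; apply: val_inj; rewrite /= aswapK. Qed.

Definition a (d i : nat) : {perm W d} := perm (inv_inj (@aswapWK d i)).

Local Open Scope group_scope.

Definition z (d : nat) (k : nat) : {perm W d} :=
  match k with
  | 0 => 1
  | 1 => a d d.-1
  | 2 => a d d.-1 ^ a d 0
  | _ => [~ a d 0, a d d.-1]
  end.

(* The section g_i of g at the first-level vertex i, restricted (pi_{d-1}) to words of
   length <= d-1, compared pointwise: pi_{d-1}(q) = g_i. *)
Definition restr_eq_section d (q g : {perm W d}) (i : bool) : Prop :=
  forall v : seq bool, size v <= d.-1 -> gact q v = drop 1 (gact g (i :: v)).

Definition essential d (P : {set {perm W d}}) : Prop :=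
  forall p, p \in P -> forall i : bool, exists2 q, q \in P & restr_eq_section q p i.

(* P(d-1) = G(d-1), i.e. pi_{d-1}(P) = G(d-1) (the inclusion pi_{d-1}(P) <= G(d-1)
   is automatic for P <= G(d)): every element of G(d-1) is the restriction of some q in P. *)
Definition full_restr d (P : {set {perm W d}}) : Prop :=
  forall h : {perm W d.-1}, h \in Gd d.-1 ->
    exists2 q, q \in P & forall v : seq bool, size v <= d.-1 -> gact q v = gact h v.

(* Main.v *)
Require Import Defs.
From mathcomp Require Import all_boot all_order all_fingroup.
From mathcomp Require Import zify.
Notation gact := Defs.gact.
Set Implicit Arguments. Unset Strict Implicit. Unset Printing Implicit Defensive.

Lemma inW d (x : W d) : size (ssval x) <= d.
Proof. by rewrite -mem_allwords; apply: ssvalP. Qed.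

Lemma gactE d (g : {perm W d}) (x : W d) : gact g (ssval x) = ssval (g x).
Proof. by rewrite /gact (@valK _ _ (W d)). Qed.

Lemma gact_out d (g : {perm W d}) w : d < size w -> gact g w = w.
Proof.
move=> H; rewrite /gact insubF //.
by apply/negbTE; rewrite mem_allwords -ltnNge.
Qed.

Lemma gact_in d (g : {perm W d}) w (Hw : size w <= d) :
  exists x : W d, ssval x = w /\ gact g w = ssval (g x).
Proof.
have Hm : w \in allwords d by rewrite mem_allwords.
exists (SeqSub Hm); split => //; by rewrite -gactE.
Qed.

Lemma gactM d (g h : {perm W d}) w : gact (g * h)%g w = gact h (gact g w).
Proof.
case: (leqP (size w) d) => Hw; last by rewrite !gact_out.
have [x [<- ->]] := gact_in (g * h)%g Hw.
by rewrite !gactE permM.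
Qed.

Lemma gact1 d w : gact (1%g : {perm W d}) w = w.
Proof.
case: (leqP (size w) d) => Hw; last by rewrite !gact_out.
by have [x [<- ->]] := gact_in 1%g Hw; rewrite perm1.
Qed.

Lemma gactV d (g : {perm W d}) w : gact g^-1 (gact g w) = w.
Proof. by rewrite -gactM mulgV gact1. Qed.
Lemma gactVK d (g : {perm W d}) w : gact g (gact g^-1 w) = w.
Proof. by rewrite -gactM mulVg gact1. Qed.

Lemma gact_inj d (g : {perm W d}) : injective (gact g).
Proof. by move=> u v H; rewrite -(gactV g u) H gactV. Qed.

Lemma perm_gactP d (g h : {perm W d}) :
  (forall w, size w <= d -> gact g w = gact h w) -> g = h.
Proof.
move=> H; apply/permP => x; apply: val_inj => /=.
by rewrite -!gactE H // inW.
Qed.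

Lemma inGd d (g : {perm W d}) :
  reflect (forall w, size w <= d -> size (gact g w) = size w /\ gact g (parent w) = parent (gact g w))
   (g \in Gd d).
Proof.
rewrite inE; apply: (iffP forallP) => [H w Hw|H x].
  have [x [Hx Hg]] := gact_in g Hw.
  by have /andP[/eqP H1 /eqP H2] := H x; rewrite Hg -Hx H1 H2.
have [H1 H2] := H _ (inW x).
by rewrite -gactE H1 H2 !eqxx.
Qed.

Lemma Gd_size d (g : {perm W d}) w : g \in Gd d -> size (gact g w) = size w.
Proof.
move/inGd => H; case: (leqP (size w) d) => Hw; first by case: (H w Hw).
by rewrite gact_out.
Qed.

Lemma Gd_parent d (g : {perm W d}) w : g \in Gd d -> size w <= d ->
  gact g (parent w) = parent (gact g w).
Proof. by move/inGd => H Hw; case: (H w Hw). Qed.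

Lemma group_set_Gd d : group_set (Gd d).
Proof.
apply/andP; split.
  by apply/inGd => w Hw; rewrite !gact1.
apply/subsetP => g /mulsgP [x y Hx Hy ->]; apply/inGd => w Hw.
rewrite !gactM !Gd_size //; split => //.
by rewrite Gd_parent // Gd_parent // Gd_size.
Qed.

Canonical Gd_group d := Group (group_set_Gd d).

Lemma size_parent w : size (parent w) = (size w).-1.
Proof. by rewrite /parent size_take; case: (size w) => //= n; rewrite ltnSn. Qed.

Lemma take_iter_parent w m : m <= size w -> take m w = iter (size w - m) parent w.
Proof.
move=> Hm; move Hk: (size w - m) => k; elim: k w Hm Hk => [|k IH] w Hm Hk.
  have -> : m = size w by apply/eqP; rewrite eqn_leq Hm /= -subn_eq0 Hk.
  by rewrite take_size.
rewrite iterSr -IH.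
- rewrite /parent take_takel //. by move: Hk; case: (size w) => //= n; lia.
- by rewrite size_parent; move: Hk; case: (size w) => //= n; lia.
- by rewrite size_parent; move: Hk; case: (size w) => //= n; lia.
Qed.

Lemma gact_iter_parent d (g : {perm W d}) k w : g \in Gd d -> size w <= d ->
  gact g (iter k parent w) = iter k parent (gact g w).
Proof.
move=> Hg; elim: k w => [|k IH] w Hw //=.
rewrite Gd_parent //; first by rewrite IH.
elim: k {IH} => [|k IHk] //=; rewrite size_parent; lia.
Qed.

Lemma Gd_take d (g : {perm W d}) m w : g \in Gd d -> size w <= d ->
  gact g (take m w) = take m (gact g w).
Proof.
move=> Hg Hw; case: (leqP m (size w)) => Hm.
  have Hm' : m <= size (gact g w) by rewrite Gd_size.
  rewrite (take_iter_parent Hm) (take_iter_parent Hm') Gd_size //.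
  by rewrite gact_iter_parent.
by rewrite !take_oversize ?Gd_size //; apply: ltnW.
Qed.

Lemma rcons_take_nth (v : seq bool) n : size v = n.+1 -> v = rcons (take n v) (nth false v n).
Proof. move=> H; by rewrite -take_nth ?H // -H take_size. Qed.

Lemma Gd_rcons d (g : {perm W d}) u b : g \in Gd d -> size u < d ->
  exists b', gact g (rcons u b) = rcons (gact g u) b' /\
             gact g (rcons u (~~ b)) = rcons (gact g u) (~~ b').
Proof.
move=> Hg Hu.
have key : forall c, exists c', gact g (rcons u c) = rcons (gact g u) c'.
  move=> c; set v := gact g (rcons u c).
  have Hs : size v = (size u).+1 by rewrite Gd_size // size_rcons.
  exists (nth false v (size u)); rewrite {1}(rcons_take_nth Hs); congr rcons.
  by rewrite -Gd_take ?size_rcons // -cats1 take_size_cat.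
have [b1 H1] := key b; have [b2 H2] := key (~~ b).
exists b1; split => //; rewrite H2; congr rcons.
have : b2 != b1.
  apply/eqP => E; have := H2; rewrite E -H1 => /gact_inj/eqP.
  by rewrite eqseq_rcons eqxx /=; case: (b).
by move: (b1) (b2) => [] [] /=; rewrite ?eqxx.
Qed.

Lemma aswap_fix i w : ~~ ((take i w == nseq i false) && (i < size w)) -> aswap i w = w.
Proof. by rewrite /aswap => /negbTE ->. Qed.

Lemma set_nth_take (w : seq bool) m i x : i < m -> i < size w ->
  take m (set_nth false w i x) = set_nth false (take m w) i x.
Proof.
move=> Him Hiw; apply: (@eq_from_nth _ false).
  by rewrite !size_take_min !size_set_nth size_take_min; lia.
move=> j; rewrite size_take_min size_set_nth => Hj.
rewrite nth_set_nth /=.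
have Hjm : j < m by lia.
rewrite !nth_take // nth_set_nth /=; by [].
Qed.

Lemma take_set_nth_ge (w : seq bool) m i x : m <= i -> i < size w -> take m (set_nth false w i x) = take m w.
Proof.
move=> Hmi Hiw; apply: (@eq_from_nth _ false).
  rewrite !size_take_min size_set_nth; lia.
move=> j; rewrite size_take_min => Hj.
have Hjm : j < m by lia.
rewrite !nth_take // nth_set_nth /=; case: eqP => // E; lia.
Qed.

Lemma aswap_take i m w : aswap i (take m w) = take m (aswap i w).
Proof.
case: (ltnP i m) => Him.
  rewrite /aswap size_take_min take_takel; last by apply: ltnW.
  case: (ltnP i (size w)) => Hiw.
    have -> : (i < minn m (size w)) by lia.
    rewrite andbT; case: ifP => // _.
    by rewrite set_nth_take // nth_take.
  have -> : (i < minn m (size w)) = false by lia.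
  by rewrite !andbF.
rewrite aswap_fix; last by rewrite negb_and orbC -leqNgt size_take_min; lia.
by rewrite /aswap; case: ifP => // /andP[_ Hi]; rewrite take_set_nth_ge.
Qed.

Lemma aswap_cat i v y : i < size v -> aswap i (v ++ y) = aswap i v ++ y.
Proof.
move=> H; rewrite /aswap size_cat takel_cat ?(ltnW H) // H (ltn_addr _ H).
case: ifP => // _; rewrite nth_cat H; apply: (@eq_from_nth _ false).
  rewrite size_cat !size_set_nth size_cat !(maxn_idPr _) //; lia.
move=> j _; rewrite nth_set_nth /= !nth_cat size_set_nth (maxn_idPr H) nth_set_nth /=.
case: eqP => [->|_]; first by rewrite H.
by [].
Qed.

Lemma aswap_nseq j b r : aswap j (nseq j false ++ b :: r) = nseq j false ++ ~~ b :: r.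
Proof.
rewrite /aswap take_size_cat ?size_nseq // eqxx size_cat size_nseq /= addnS ltnS leq_addr /=.
rewrite nth_cat size_nseq ltnn subnn /=.
apply: (@eq_from_nth _ false); first by rewrite size_set_nth !size_cat /= size_nseq; lia.
move=> k _; rewrite nth_set_nth /= !nth_cat size_nseq.
case: eqP => [->|/eqP ne]; first by rewrite ltnn subnn.
case: ltnP => // H; case E: (k - j) => [|m] //; lia.
Qed.

Lemma size_aswap' i w : size (aswap i w) = size w.
Proof. exact: size_aswap. Qed.

Lemma gact_a d i w : size w <= d -> gact (a d i) w = aswap i w.
Proof.
move=> Hw; have [x [<- ->]] := gact_in (a d i) Hw.
by rewrite /a permE.
Qed.

Lemma a_Gd d i : a d i \in Gd d.
Proof.
apply/inGd => w Hw; rewrite !gact_a ?size_aswap //; last first.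
  by rewrite size_parent; lia.
by rewrite /parent aswap_take size_aswap.
Qed.


Lemma tperm_comm (T : finType) (x y u v : T) :
  x != u -> x != v -> y != u -> y != v ->
  (tperm x y * tperm u v = tperm u v * tperm x y)%g.
Proof.
move=> h1 h2 h3 h4; apply/permP => w; rewrite !permM.
have h1' := h1; have h2' := h2; have h3' := h3; have h4' := h4.
rewrite eq_sym in h1'; rewrite eq_sym in h2'; rewrite eq_sym in h3'; rewrite eq_sym in h4'.
case: (eqVneq w x) => [->|nx].
  by rewrite tpermL (tpermD h1' h2') tpermL (tpermD h3' h4').
case: (eqVneq w y) => [->|ny].
  by rewrite tpermR (tpermD h3' h4') tpermR (tpermD h1' h2').
case: (eqVneq w u) => [->|nu].
  by rewrite tpermL (tpermD h1 h3) tpermL (tpermD h2 h4).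
case: (eqVneq w v) => [->|nv].
  by rewrite tpermR (tpermD h2 h4) tpermR (tpermD h1 h3).
rewrite eq_sym in nx; rewrite eq_sym in ny; rewrite eq_sym in nu; rewrite eq_sym in nv.
by rewrite (tpermD nx ny) (tpermD nu nv) (tpermD nx ny).
Qed.

Definition rootW d : W d := SeqSub (etrans (mem_allwords d [::]) (leq0n d)).
Definition mkW d (w : seq bool) : W d := insubd (rootW d) w.

Lemma mkWK d w : size w <= d -> ssval (mkW d w) = w.
Proof. by move=> H; rewrite /mkW insubdK // mem_allwords. Qed.

Lemma eq_mkW d (x : W d) v : size v <= d -> (x == mkW d v) = (ssval x == v).
Proof. by move=> H; rewrite -(inj_eq val_inj) /= mkWK. Qed.

Lemma gact_mkW d (g : {perm W d}) v : size v <= d -> g (mkW d v) = mkW d (gact g v).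
Proof.
move=> H; apply: val_inj => /=.
have Hs : size (gact g v) <= d.
  have [x [Hx ->]] := gact_in g H; exact: inW.
by rewrite mkWK // -gactE mkWK.
Qed.

Definition t d (u : seq bool) : {perm W d} :=
  tperm (mkW d (rcons u false)) (mkW d (rcons u true)).

Lemma gact_t d u w : size u = d.-1 -> 0 < d ->
  gact (t d u) w = if w == rcons u false then rcons u true
                   else if w == rcons u true then rcons u false else w.
Proof.
move=> Hu Hd.
have Hs : forall b, size (rcons u b) <= d by move=> b; rewrite size_rcons Hu; lia.
case: (leqP (size w) d) => Hw; last first.
  rewrite gact_out //; case: eqP => [E|_]; first by move: Hw; rewrite E; move: (Hs false); lia.
  case: eqP => [E|_] //; by move: Hw; rewrite E; move: (Hs true); lia.
have [x [<- ->]] := gact_in (t d u) Hw.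
rewrite /t; case: (tpermP (mkW d (rcons u false)) (mkW d (rcons u true)) x) => [->|->|].
- by rewrite !mkWK // eqxx.
- rewrite !mkWK // eqxx; case: eqP => // /eqP; by rewrite eqseq_rcons eqxx.
- by move/eqP; rewrite eq_mkW // => /negbTE ->; move/eqP; rewrite eq_mkW // => /negbTE ->.
Qed.

Lemma t_fix d u w : size u = d.-1 -> 0 < d -> size w != d -> gact (t d u) w = w.
Proof.
move=> Hu Hd Hw; rewrite gact_t //.
case: eqP => [E|_]; first by move: Hw; rewrite E size_rcons Hu; lia.
case: eqP => [E|_] //; by move: Hw; rewrite E size_rcons Hu; lia.
Qed.

Lemma tJ d (g : {perm W d}) u : g \in Gd d -> size u = d.-1 -> 0 < d ->
  (t d u ^ g)%g = t d (gact g u).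
Proof.
move=> Hg Hu Hd; rewrite /t tpermJ.
have Hs : forall b, size (rcons u b) <= d by move=> b; rewrite size_rcons Hu; lia.
rewrite !gact_mkW //.
have Hlt : size u < d by rewrite Hu; lia.
have [b' [-> ->]] := @Gd_rcons d g u false Hg Hlt.
by case: b' => //=; rewrite tpermC.
Qed.

Definition e0 d := nseq d.-1 false.

Lemma a_last d : 0 < d -> a d d.-1 = t d (e0 d).
Proof.
move=> Hd; apply: perm_gactP => w Hw.
have Hu : size (e0 d) = d.-1 by rewrite size_nseq.
rewrite gact_a // gact_t //.
have E : forall b, rcons (e0 d) b = nseq d.-1 false ++ b :: [::] by move=> b; rewrite -cats1.
case: (boolP [exists b : bool, w == rcons (e0 d) b]) => [/existsP [b /eqP ->]|].
  rewrite E aswap_nseq -!E; case: b => /=; rewrite eqxx //.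
  by case: eqP => // /eqP; rewrite eqseq_rcons eqxx.
rewrite negb_exists => /forallP H.
rewrite (negbTE (H false)) (negbTE (H true)) aswap_fix //.
apply/negP => /andP [/eqP Ht Hl].
have Hs : size w = d.-1.+1 by apply/eqP; rewrite eqn_leq Hl andbT prednK.
have := rcons_take_nth Hs; rewrite Ht => Hw'.
by have := H (nth false w d.-1); rewrite {1}Hw' eqxx.
Qed.

Lemma t_inv d u : (t d u * t d u = 1)%g.
Proof. by rewrite /t tperm2. Qed.

Lemma t_comm d u v : size u = d.-1 -> size v = d.-1 -> 0 < d ->
  (t d u * t d v = t d v * t d u)%g.
Proof.
move=> Hu Hv Hd; case: (eqVneq u v) => [->//|ne].
have Hs : forall (w0 : seq bool) (b0 : bool), size w0 = d.-1 -> size (rcons w0 b0) <= d.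
  by move=> w0 b0 Hw0; rewrite size_rcons Hw0; lia.
have K : forall b c, mkW d (rcons u b) != mkW d (rcons v c).
  move=> b c; rewrite eq_mkW; last by apply: Hs.
  by rewrite mkWK ?eqseq_rcons ?negb_and ?ne //; apply: Hs.
by apply: tperm_comm; apply: K.
Qed.

Notation A d := (<<[set a d i | i : 'I_d]>>%g).

Lemma a_A d i : i < d -> a d i \in A d.
Proof. by move=> H; apply: mem_gen; apply/imsetP; exists (Ordinal H). Qed.

Lemma A_Gd d : A d \subset Gd d.
Proof. by rewrite gen_subG; apply/subsetP => x /imsetP [i _ ->]; apply: a_Gd. Qed.

Lemma gact_ext d (g : {perm W d}) w (F : seq bool -> seq bool) :
  (forall w, size w <= d -> gact g w = F w) -> (forall w, d < size w -> F w = w) -> gact g w = F w.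
Proof. move=> H1 H2; case: (leqP (size w) d) => H; [exact: H1| by rewrite gact_out // H2]. Qed.

Lemma TR d n p : n < d -> size p = n -> exists c, [/\ c \in A d,
  gact c (nseq n false) = p,
  (forall x y, size x = n -> size (x ++ y) <= d -> gact c (x ++ y) = gact c x ++ y) &
  (forall w, (forall j, j < n -> nth false p j -> take j w != nseq j false) -> gact c w = w)].
Proof.
move=> Hnd Hp.
suff: forall i, i <= n -> exists c, [/\ c \in A d,
  gact c (nseq n false) = nseq (n - i) false ++ drop (n - i) p,
  (forall x y, size x = n -> size (x ++ y) <= d -> gact c (x ++ y) = gact c x ++ y) &
  (forall w, (forall j, n - i <= j -> j < n -> nth false p j -> take j w != nseq j false) -> gact c w = w)].
  move=> /(_ n (leqnn n)) [c [H1 H2 H3 H4]]; exists c; split => //.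
    by rewrite H2 subnn drop0.
  by move=> w Hw; apply: H4 => j _; apply: Hw.
elim=> [|i IH] Hi.
  exists 1%g; split => //.
  - by rewrite !gact1 subn0 drop_oversize ?Hp // cats0.
  - by move=> x y _ _; rewrite !gact1.
  - by move=> w _; rewrite gact1.
have [c [Hc1 Hc2 Hc3 Hc4]] := IH (ltnW Hi).
set j := n - i.+1.
have Hj : n - i = j.+1 by rewrite /j; lia.
have Hjn : j < n by rewrite /j; lia.
have Hdrop : drop j p = nth false p j :: drop j.+1 p by rewrite (drop_nth false) // Hp.
have Hns : nseq j.+1 false = nseq j false ++ [:: false] by rewrite -addn1 nseqD.
have cGd : c \in Gd d by apply: (subsetP (A_Gd d)).
case Hpj: (nth false p j).
- exists (c * a d j)%g; split.
  + by rewrite groupM // a_A //; lia.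
  + rewrite gactM Hc2 Hj gact_a; last by rewrite size_cat size_nseq size_drop Hp; lia.
    by rewrite Hns -catA /= aswap_nseq Hdrop Hpj.
  + move=> x y Hx Hxy; rewrite !gactM Hc3 // !gact_a.
    * by rewrite aswap_cat // Gd_size // Hx.
    * by rewrite Gd_size //; lia.
    * by rewrite size_cat Gd_size // -size_cat.
  + move=> w Hw; rewrite gactM Hc4; last first.
      by move=> k Hk1 Hk2 Hk3; apply: Hw => //; lia.
    case: (leqP (size w) d) => Hwd; last by rewrite gact_out.
    rewrite gact_a // aswap_fix // negb_and Hw //.
- exists c; split => //.
  + by rewrite Hc2 Hj Hns -catA /= Hdrop Hpj.
  + move=> w Hw; apply: Hc4 => k Hk1 Hk2 Hk3; apply: Hw => //.
    rewrite /j; case: (eqVneq k (n - i.+1)) => [E|ne]; last by lia.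
    by move: Hk3; rewrite E -/j Hpj.
Qed.

Lemma A_Gd' d c : c \in A d -> c \in Gd d.
Proof. by move=> H; apply: (subsetP (A_Gd d)). Qed.

Lemma sigma d n p : n < d -> size p = n -> exists s, [/\ s \in A d,
  (forall w, size w <= n -> gact s w = w),
  (forall b, gact s (rcons p b) = rcons p (~~ b)) &
  (forall w, size w = n.+1 -> take n w != p -> gact s w = w)].
Proof.
move=> Hnd Hp; have [c [Hc1 Hc2 Hc3 Hc4]] := TR Hnd Hp.
have cG := A_Gd' Hc1; have cVG : (c^-1 \in Gd d)%g by rewrite groupV.
exists (a d n ^ c)%g; split.
- by rewrite groupJ // a_A.
- move=> w Hw; rewrite conjgE !gactM gact_a ?Gd_size //; last by lia.
  by rewrite aswap_fix ?gactVK // negb_and Gd_size // -leqNgt Hw orbT.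
- move=> b; rewrite conjgE !gactM.
  have E : gact c (nseq n false ++ [:: b]) = rcons p b.
    rewrite Hc3; [by rewrite Hc2 cats1 | by rewrite size_nseq | by rewrite size_cat size_nseq /=; lia].
  rewrite -E gactV gact_a; last by rewrite size_cat size_nseq /=; lia.
  rewrite aswap_nseq Hc3; [by rewrite Hc2 cats1 | by rewrite size_nseq | by rewrite size_cat size_nseq /=; lia].
- move=> w Hw Hne; rewrite conjgE !gactM gact_a; last by rewrite Gd_size // Hw.
  rewrite aswap_fix ?gactVK //.
  rewrite -Gd_take //; last by rewrite Hw.
  apply/negP => /andP [/eqP E _]; move/negP: Hne; apply.
  by rewrite -Hc2 -E gactVK.
Qed.

Definition moved d (g : {perm W d}) m : {set W d} :=
  [set y : W d | (size (ssval y) == m) && (g y != y)].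

Lemma step d m (X : {group {perm W d}}) : 0 < m -> m <= d ->
  (forall p, size p = m.-1 -> exists2 s, s \in X & [/\ s \in Gd d,
     (forall w, size w < m -> gact s w = w),
     (forall b, gact s (rcons p b) = rcons p (~~ b)) &
     (forall w, size w = m -> take m.-1 w != p -> gact s w = w)]) ->
  forall g, g \in Gd d -> (forall w, size w < m -> gact g w = w) ->
  exists2 x, x \in X & (forall w, size w <= m -> gact (x * g)%g w = w).
Proof.
move=> Hm0 Hmd HX g Hg Hfix.
move: {2}#|moved g m| (leqnn #|moved g m|) => N.
elim: N g Hg Hfix => [|N IH] g Hg Hfix Hcard.
  exists 1%g; first exact: group1.
  move=> w Hw; rewrite mul1g; case: (ltnP (size w) m) => Hwm; first exact: Hfix.
  have Hw' : size w = m by lia.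
  have [y [Hy ->]] := gact_in g (leq_trans Hw Hmd).
  have : y \notin moved g m.
    by apply/negP => Hin; move: Hcard; rewrite leqn0 => /eqP/cards0_eq E; rewrite E inE in Hin.
  by rewrite inE Hy Hw' eqxx /= negbK => /eqP ->.
case: (leqP #|moved g m| N) => HN; first exact: IH.
have : 0 < #|moved g m| by lia.
rewrite card_gt0 => /set0Pn [y]; rewrite inE => /andP [/eqP Hsy Hmv].
set w := ssval y.
set p := take m.-1 w; set b := nth false w m.-1.
have Hwp : w = rcons p b by apply: rcons_take_nth; rewrite Hsy prednK.
have Hp : size p = m.-1 by rewrite size_takel // Hsy; lia.
have Hpfix : gact g p = p by apply: Hfix; rewrite Hp; lia.
have Hpd : size p < d by rewrite Hp; lia.
have [b' [Hb1 Hb2]] := @Gd_rcons d g p b Hg Hpd.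
have Hbb : b' = ~~ b.
  move: Hmv; apply: contraNeq => ne; apply/eqP; apply: val_inj.
  rewrite /= -gactE -/w {1 2}Hwp Hb1 Hpfix; congr rcons; by case: (b) (b') ne => [] [].
rewrite Hpfix Hbb in Hb1 Hb2; rewrite negbK in Hb2.
have [s Hs [sG s1 s2 s3]] := HX p Hp.
have g'G : (s * g)%g \in Gd d by rewrite groupM.
have g'fix : forall w, size w < m -> gact (s * g)%g w = w by move=> w0 H0; rewrite gactM s1 // Hfix.
have Hsub : moved (s * g)%g m \proper moved g m.
  apply/properP; split.
    apply/subsetP => y'; rewrite !inE => /andP [/eqP Hs' Hmv']; rewrite Hs' eqxx /=.
    move: Hmv'; apply: contraNN => /eqP E; apply/eqP; apply: val_inj => /=.
    rewrite -gactE gactM.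
    case: (eqVneq (take m.-1 (ssval y')) p) => Hpp; last by rewrite s3 // gactE E.
    set c := nth false (ssval y') m.-1.
    have Hy' : ssval y' = rcons p c.
      rewrite -Hpp; apply: rcons_take_nth; rewrite Hs'; lia.
    exfalso; move: E => /(congr1 val) /=; rewrite -gactE Hy'.
    case: (boolP (c == b)) => [/eqP ->|ne].
      by rewrite Hb1 => /eqP; rewrite eqseq_rcons eqxx /=; case: (b).
    have -> : c = ~~ b by move: ne; case: (b); case: (c).
    by rewrite Hb2 => /eqP; rewrite eqseq_rcons eqxx /=; case: (b).
  exists y; first by rewrite inE Hsy eqxx.
  rewrite inE Hsy eqxx /= negbK; apply/eqP; apply: val_inj => /=.
  by rewrite -gactE gactM -/w Hwp s2 Hb2.
have [x Hx Hxfix] := IH (s * g)%g g'G g'fix (leq_trans (proper_card Hsub) Hcard).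
exists (x * s)%g; first by rewrite groupM.
by move=> w0 Hw0; rewrite -mulgA Hxfix.
Qed.

Lemma gact_nil d (g : {perm W d}) : g \in Gd d -> gact g [::] = [::].
Proof. by move=> Hg; apply/eqP; rewrite -size_eq0 Gd_size. Qed.

Lemma gen_Gd d : Gd d \subset A d.
Proof.
apply/subsetP => g Hg.
suff H : forall k, k <= d -> forall g, g \in Gd d ->
    (forall w, size w < d.+1 - k -> gact g w = w) -> g \in A d.
  apply: (H d (leqnn d) g Hg) => w; rewrite subSnn ltnS leqn0 size_eq0 => /eqP ->.
  exact: gact_nil.
elim=> [|k IH] Hk g0 Hg0 Hfix.
  have -> : g0 = 1%g.
    by apply: perm_gactP => w Hw; rewrite gact1 Hfix // subn0.
  exact: group1.
have Hm : d.+1 - k.+1 = (d - k) by lia.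
rewrite Hm in Hfix.
have HX : forall p, size p = (d - k).-1 -> exists2 s, s \in A d & [/\ s \in Gd d,
     (forall w, size w < d - k -> gact s w = w),
     (forall b, gact s (rcons p b) = rcons p (~~ b)) &
     (forall w, size w = d - k -> take (d - k).-1 w != p -> gact s w = w)].
  move=> p Hp; have Hlt : (d - k).-1 < d by lia.
  have [s [s0 s1 s2 s3]] := sigma Hlt Hp.
  exists s => //; split => //; first exact: A_Gd'.
  - by move=> w Hw; apply: s1; lia.
  - by move=> w Hw; apply: s3; lia.
have [x Hx Hxfix] := @step d (d - k) (<<[set a d i | i : 'I_d]>>)%G ltac:(lia) ltac:(lia) HX g0 Hg0 Hfix.
have : (x * g0)%g \in A d.
  apply: IH; [lia | by rewrite groupM // A_Gd' |].
  by move=> w Hw; apply: Hxfix; lia.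
by rewrite groupMl.
Qed.

Definition K d : {set {perm W d}} :=
  [set g in Gd d | [forall y : W d, (size (ssval y) < d) ==> (g y == y)]].

Lemma inK d (g : {perm W d}) :
  reflect (g \in Gd d /\ forall w, size w < d -> gact g w = w) (g \in K d).
Proof.
apply: (iffP idP) => [|[H1 H2]].
  rewrite /K in_set => /andP [H1 /forallP H2]; split => //.
  move=> w Hw; have [y [Hy ->]] := gact_in g (ltnW Hw).
  by move: (H2 y); rewrite Hy Hw /= => /eqP ->.
rewrite /K in_set H1 /=.
apply/forallP => y; apply/implyP => Hy; apply/eqP; apply: val_inj => /=.
by rewrite -gactE H2.
Qed.

Lemma group_set_K d : group_set (K d).
Proof.
apply/andP; split.
  by apply/inK; split; [exact: group1 | move=> w _; rewrite gact1].
apply/subsetP => g /mulsgP [x y /inK [Hx1 Hx2] /inK [Hy1 Hy2] ->].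
apply/inK; split; first by rewrite groupM.
by move=> w Hw; rewrite gactM Hx2 // Hy2.
Qed.
Canonical K_group d := Group (group_set_K d).

Lemma K_Gd d : K d \subset Gd d.
Proof. by apply/subsetP => g /inK []. Qed.

Lemma t_A d u : size u = d.-1 -> 0 < d -> t d u \in A d.
Proof.
move=> Hu Hd; have Hlt : d.-1 < d by lia.
have [c [Hc1 Hc2 _ _]] := TR Hlt Hu.
have -> : t d u = (a d d.-1 ^ c)%g.
  by rewrite a_last // tJ ?A_Gd' // ?size_nseq // Hc2.
by rewrite groupJ // a_A.
Qed.

Lemma t_Gd d u : size u = d.-1 -> 0 < d -> t d u \in Gd d.
Proof. by move=> Hu Hd; rewrite A_Gd' // t_A. Qed.

Lemma t_K d u : size u = d.-1 -> 0 < d -> t d u \in K d.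
Proof.
move=> Hu Hd; apply/inK; split; first exact: t_Gd.
by move=> w Hw; rewrite t_fix //; lia.
Qed.

Definition T d : {set {perm W d}} :=
  [set t d (ssval y) | y in [set y : W d | size (ssval y) == d.-1]].

Lemma t_T d u : size u = d.-1 -> 0 < d -> t d u \in T d.
Proof.
move=> Hu Hd; apply/imsetP; exists (mkW d u); last by rewrite mkWK // Hu; lia.
by rewrite inE mkWK ?Hu //; lia.
Qed.

Lemma K_T d : 0 < d -> K d \subset <<T d>>%g.
Proof.
move=> Hd; apply/subsetP => g /inK [Hg Hfix].
have HX : forall p, size p = d.-1 -> exists2 s, s \in <<T d>>%G & [/\ s \in Gd d,
     (forall w, size w < d -> gact s w = w),
     (forall b, gact s (rcons p b) = rcons p (~~ b)) &
     (forall w, size w = d -> take d.-1 w != p -> gact s w = w)].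
  move=> p Hp; exists (t d p); first by apply: mem_gen; apply: t_T.
  split; first exact: t_Gd.
  - by move=> w Hw; rewrite t_fix //; lia.
  - by move=> b; rewrite gact_t //; case: b; rewrite eqxx //;
      case: eqP => // /eqP; rewrite eqseq_rcons eqxx.
  - move=> w Hw Hne; rewrite gact_t //.
    case: eqP => [E|_]; first by move: Hne; rewrite E -cats1 take_size_cat ?Hp // eqxx.
    case: eqP => [E|_] //; by move: Hne; rewrite E -cats1 take_size_cat ?Hp // eqxx.
have [x Hx Hxfix] := @step d d (<<T d>>)%G Hd (leqnn d) HX g Hg Hfix.
have E : (x * g = 1)%g by apply: perm_gactP => w Hw; rewrite gact1 Hxfix.
have -> : g = x^-1%g by rewrite -(mulKg x g) E mulg1.
by rewrite groupV.
Qed.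

Lemma K_abelian d : 0 < d -> abelian (K d).
Proof.
move=> Hd; apply: (abelianS (K_T Hd)); rewrite abelian_gen.
apply/centsP => x /imsetP [y]; rewrite inE => /eqP Hy -> z /imsetP [y'].
rewrite inE => /eqP Hy' ->; exact: t_comm.
Qed.

Open Scope group_scope.

Lemma cyc2 (gT : finGroupType) (x y : gT) : x * x = 1 -> y \in <[x]> -> y = 1 \/ y = x.
Proof.
move=> Hx /cycleP [n ->]; elim: n => [|n [IH|IH]]; [by left | right | left].
  by rewrite expgSr IH mul1g.
by rewrite expgSr IH.
Qed.

Lemma card_cyc2 (gT : finGroupType) (x : gT) : x * x = 1 -> #|<[x]>| <= 2.
Proof.
move=> Hx; apply: (@leq_trans #|[set 1; x]|); last by rewrite cards2; case: eqP.
apply: subset_leq_card; apply/subsetP => y /(cyc2 Hx) [->|->]; by rewrite !inE eqxx ?orbT.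
Qed.

Lemma card_join_le (gT : finGroupType) (G H : {group gT}) :
  commute G H -> #|G <*> H| <= #|G| * #|H|.
Proof.
move=> C; rewrite comm_joingE // mul_cardG.
by apply: leq_pmulr; rewrite cardG_gt0.
Qed.

Lemma rc_neq (gT : finGroupType) (M : {group gT}) a b : a * b^-1 \notin M -> M :* a != M :* b.
Proof.
apply: contra => /eqP E; rewrite -mem_rcoset -E; exact: rcoset_refl.
Qed.

Lemma coset4 (gT : finGroupType) (M K : {group gT}) (x1 x2 y : gT) :
  M \subset K -> #|K : M| = 4 -> x1 \in K -> x2 \in K -> x1 * x2 = x2 * x1 ->
  x1 \notin M -> x2 \notin M -> x1 * x2^-1 \notin M -> x1 * x2 \notin M -> y \in K ->
  [\/ y \in M, y * x1^-1 \in M, y * x2^-1 \in M | y * (x1 * x2)^-1 \in M].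
Proof.
move=> sMK iKM k1 k2 C n1 n2 n12 n12' ky.
set R := M :* 1 |: (M :* x1 |: (M :* x2 |: [set M :* (x1 * x2)])).
have sR : R \subset rcosets M K.
  by apply/subsetP => X; rewrite !inE -?orbA; case/or4P => /eqP ->; apply/rcosetsP;
    [exists 1 | exists x1 | exists x2 | exists (x1 * x2)]; rewrite ?group1 ?groupM.
have nV : forall u, u \notin M -> u^-1 \notin M by move=> u; rewrite groupV.
have d01 : M :* 1 != M :* x1 by apply: rc_neq; rewrite mul1g nV.
have d02 : M :* 1 != M :* x2 by apply: rc_neq; rewrite mul1g nV.
have d03 : M :* 1 != M :* (x1 * x2) by apply: rc_neq; rewrite mul1g nV.
have d12 : M :* x1 != M :* x2 by apply: rc_neq.
have d13 : M :* x1 != M :* (x1 * x2).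
  by apply: rc_neq; rewrite C invMg mulgA mulgV mul1g nV.
have d23 : M :* x2 != M :* (x1 * x2).
  by apply: rc_neq; rewrite invMg mulgA mulgV mul1g nV.
have cR : #|R| = 4.
  rewrite /R !cardsU1 cards1 !inE.
  by rewrite (negbTE d01) (negbTE d02) (negbTE d03) (negbTE d12) (negbTE d13) (negbTE d23).
have ER : R = rcosets M K.
  by apply/eqP; rewrite eqEcard sR cR -iKM /indexg leqnn.
have : M :* y \in R by rewrite ER; apply/rcosetsP; exists y.
rewrite !inE -?orbA; case/or4P => /eqP E.
- by apply: Or41; rewrite -(mulg1 y) -invg1 -mem_rcoset -E rcoset_refl.
- by apply: Or42; rewrite -mem_rcoset -E rcoset_refl.
- by apply: Or43; rewrite -mem_rcoset -E rcoset_refl.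
- by apply: Or44; rewrite -mem_rcoset -E rcoset_refl.
Qed.

Close Scope group_scope.

Lemma aswapE i (w : seq bool) : take i w = nseq i false -> i < size w ->
  aswap i w = set_nth false w i (~~ nth false w i).
Proof. by move=> H1 H2; rewrite /aswap H1 eqxx H2. Qed.

Lemma aswap0 (w : seq bool) : 0 < size w -> aswap 0 w = set_nth false w 0 (~~ nth false w 0).
Proof. by move=> H; rewrite aswapE // take0. Qed.

Lemma nth_aswap_ne i (w : seq bool) j : j != i -> nth false (aswap i w) j = nth false w j.
Proof.
move=> ne; rewrite /aswap; case: ifP => // _.
by rewrite nth_set_nth /= (negbTE ne).
Qed.

Lemma set_nth_id (w : seq bool) i : i < size w -> set_nth false w i (nth false w i) = w.
Proof.
move=> H; apply: (@eq_from_nth _ false); first by rewrite size_set_nth (maxn_idPr H).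
by move=> j _; rewrite nth_set_nth /=; case: eqP => [->|].
Qed.

Lemma set_nth_twice (w : seq bool) i x y :
  set_nth false (set_nth false w i x) i y = set_nth false w i y.
Proof. by rewrite set_set_nth eqxx. Qed.

Definition e1 d := true :: nseq d.-2 false.
Definition FF d := aswap 1 (e0 d).

Lemma size_e0 d : size (e0 d) = d.-1.
Proof. by rewrite size_nseq. Qed.

Lemma size_e1 d : 2 <= d -> size (e1 d) = d.-1.
Proof. by move=> H; rewrite /= size_nseq; lia. Qed.

Lemma size_FF d : size (FF d) = d.-1.
Proof. by rewrite /FF size_aswap size_e0. Qed.

Lemma e0E d : 2 <= d -> e0 d = false :: nseq d.-2 false.
Proof. by move=> H; rewrite /e0; case: d H => [|[|d]]. Qed.

Lemma aswap0_e0 d : 2 <= d -> aswap 0 (e0 d) = e1 d.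
Proof. by move=> H; rewrite e0E // aswap0. Qed.

Lemma aswap1_FF d : aswap 1 (FF d) = e0 d.
Proof. exact: aswapK. Qed.

Lemma nth0_FF d : nth false (FF d) 0 = false.
Proof. by rewrite /FF nth_aswap_ne // /e0 nth_nseq; case: ifP. Qed.

Lemma nth1_FF d : 2 < d -> nth false (FF d) 1 = true.
Proof.
move=> H; rewrite /FF aswapE ?size_e0; last by lia.
  by rewrite nth_set_nth /= /e0 nth_nseq; case: ifP.
by rewrite /e0 take_nseq //; lia.
Qed.

Lemma take_FF d j : 2 <= j -> j < d.-1 -> take j (FF d) != nseq j false.
Proof.
move=> H1 H2; apply/eqP => E.
have := congr1 (fun s => nth false s 1) E; rewrite /= nth_take; last by lia.
by rewrite nth1_FF; [rewrite nth_nseq; case: ifP | lia].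
Qed.

Lemma aswap1_half1 (w : seq bool) : nth false w 0 = true -> aswap 1 w = w.
Proof.
move=> H; apply: aswap_fix; apply/negP => /andP [/eqP E _].
by move: E H; case: w => //= b w [->].
Qed.

Lemma nth0_aswap0 (w : seq bool) : 0 < size w -> nth false (aswap 0 w) 0 = ~~ nth false w 0.
Proof. by move=> H; rewrite aswap0 // nth_set_nth. Qed.

Lemma t_V d u : (t d u)^-1%g = t d u.
Proof. by rewrite /t tpermV. Qed.

Lemma conj_tt d (g : {perm W d}) u v : g \in Gd d -> size u = d.-1 -> size v = d.-1 -> 0 < d ->
  ((t d u * t d v) ^ g)%g = (t d (gact g u) * t d (gact g v))%g.
Proof. by move=> Hg Hu Hv Hd; rewrite conjMg !tJ. Qed.

Definition S d b : {set W d} := [set y : W d | (size (ssval y) == d.-1) && (nth false (ssval y) 0 == b)].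

Definition M0 d : {set {perm W d}} :=
  <<[set (t d (e0 d) * t d (ssval y))%g | y in S d false] :|:
    [set (t d (e1 d) * t d (ssval y))%g | y in S d true]>>%g.

Lemma M0_sub d (N0 : {group {perm W d}}) : 2 <= d ->
  (forall g x, g \in Gd d -> x \in N0 -> (x ^ g)%g \in N0) ->
  (t d (FF d) * t d (e0 d))%g \in N0 -> M0 d \subset N0.
Proof.
move=> Hd HN Hc.
have Hd0 : 0 < d by lia.
have half0 : forall u, size u = d.-1 -> nth false u 0 = false -> (t d (e0 d) * t d u)%g \in N0.
  move=> u Hu Hu0; have Hlt : d.-1 < d by lia.
  case Hu1: (nth false u 1).
  -
    set u' := set_nth false u 1 false.
    have H1u : 1 < size u by case: (ltnP 1 (size u)) => // H; move: Hu1; rewrite nth_default.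
    have Hs' : size u' = d.-1 by rewrite size_set_nth (maxn_idPr H1u) Hu.
    have [c [Hc1 Hc2 _ Hc4]] := TR Hlt Hs'.
    have cG := A_Gd' Hc1.
    have gG : (c * a d 1)%g \in Gd d by rewrite groupM // a_Gd.
    have Ee0 : gact (c * a d 1)%g (e0 d) = u.
      rewrite gactM Hc2 gact_a ?Hs' //; last by lia.
      rewrite aswapE; first by rewrite /u' set_nth_twice nth_set_nth /= -Hu1 set_nth_id.
        by move: Hu0 H1u; rewrite /u'; case: (u) => [|b0 [|b1 w]] //= ->.
      by rewrite Hs' -Hu.
    have EF : gact (c * a d 1)%g (FF d) = e0 d.
      rewrite gactM Hc4; first by rewrite gact_a; [exact: aswap1_FF | rewrite size_FF; lia].
      move=> j Hj Hj1; apply: take_FF => //.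
      case: j Hj Hj1 => [|[|j]] //= _.
        by rewrite /u' nth_set_nth /= Hu0.
      by rewrite /u' nth_set_nth.
    have := HN _ _ gG Hc; rewrite conj_tt ?size_FF ?size_e0 //.
    by rewrite Ee0 EF.
  - have [c [Hc1 Hc2 _ Hc4]] := TR Hlt Hu.
    have cG := A_Gd' Hc1.
    have EF : gact c (FF d) = FF d.
      apply: Hc4 => j Hj Hj1; apply: take_FF => //.
      by case: j Hj Hj1 => [|[|j]] //= _; [rewrite Hu0 | rewrite Hu1].
    have := HN _ _ cG Hc; rewrite conj_tt ?size_FF ?size_e0 // EF Hc2 => Hc'.
    have -> : (t d (e0 d) * t d u = (t d (FF d) * t d (e0 d))^-1 * (t d (FF d) * t d u))%g.
      by rewrite invMg !t_V -mulgA (mulgA (t d (FF d))) t_inv mul1g.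
    by rewrite groupM // groupV.
rewrite /M0 gen_subG; apply/subsetP => x; rewrite inE => /orP [] /imsetP [y].
  by rewrite inE => /andP [/eqP Hy /eqP Hy0] ->; apply: half0.
rewrite inE => /andP [/eqP Hy /eqP Hy0] ->.
set u := ssval y; set u'' := set_nth false u 0 false.
have Hpos : 0 < size u by rewrite /u Hy; lia.
have Hs'' : size u'' = d.-1 by rewrite size_set_nth /u (maxn_idPr Hpos) Hy.
have H0'' : nth false u'' 0 = false by rewrite nth_set_nth.
have := HN _ _ (a_Gd d 0) (half0 u'' Hs'' H0'').
rewrite conj_tt; [|exact: a_Gd | exact: size_e0 | exact: Hs'' | lia].
rewrite !gact_a; [| rewrite Hs''; lia | rewrite size_e0; lia].
rewrite aswap0_e0 // aswap0; last by rewrite Hs''; lia.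
by rewrite /u'' set_nth_twice nth_set_nth /= -Hy0 set_nth_id.
Qed.

Open Scope group_scope.

Lemma tJa d i u : size u = d.-1 -> 0 < d -> t d u ^ a d i = t d (aswap i u).
Proof. by move=> Hu Hd; rewrite tJ ?a_Gd // gact_a // Hu; lia. Qed.

Lemma c_in_M d (M : {group {perm W d}}) : 2 <= d -> M \subset K d -> #|K d : M| = 4 ->
  (forall g x, g \in Gd d -> x \in M -> x ^ g \in M) ->
  t d (FF d) * t d (e0 d) \in M.
Proof.
move=> Hd sMK iKM HN.
have Hd0 : 0 < d by lia.
set al := t d (e0 d); set be := t d (FF d); set ga := t d (e1 d); set de := t d (aswap 0 (FF d)).
have sF1 : size (aswap 0 (FF d)) = d.-1 by rewrite size_aswap size_FF.
have Hal1 : al ^ a d 1 = be by rewrite /al tJa ?size_e0.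
have Hbe1 : be ^ a d 1 = al by rewrite /be tJa ?size_FF // aswap1_FF.
have Hga1 : ga ^ a d 1 = ga by rewrite /ga tJa ?size_e1 // aswap1_half1.
have Hde1 : de ^ a d 1 = de.
  rewrite /de tJa // aswap1_half1 // nth0_aswap0 ?size_FF ?nth0_FF //; lia.
have Hga0 : ga ^ a d 0 = al by rewrite /ga tJa ?size_e1 // -aswap0_e0 // aswapK.
have Hde0 : de ^ a d 0 = be by rewrite /de tJa // aswapK.
have kal : al \in K d by apply: t_K; rewrite ?size_e0.
have kbe : be \in K d by apply: t_K; rewrite ?size_FF.
have kga : ga \in K d by apply: t_K; rewrite ?size_e1.
have kde : de \in K d by apply: t_K.
have C : al * be = be * al by apply: t_comm; rewrite ?size_e0 ?size_FF.
have Vbe : be^-1 = be by apply: t_V.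
have Val : al^-1 = al by apply: t_V.
have G0 := a_Gd d 0; have G1 := a_Gd d 1.
have conjB : forall g x y, g \in Gd d -> x * y^-1 \in M -> x ^ g * (y ^ g)^-1 \in M.
  by move=> g x y Hg H; rewrite -conjVg -conjMg; apply: HN.
suff Hab : al * be^-1 \in M.
  have -> : be * al = (al * be^-1)^-1 by rewrite invMg invgK Val.
  by rewrite groupV.

apply/negPn/negP => n12.
have n1 : al \notin M.
  apply/negP => H; move: n12; rewrite groupM // groupV -Hal1; exact: HN.
have n2 : be \notin M.
  apply/negP => H; move: n12; rewrite groupM // ?groupV // -Hbe1; exact: HN.
have n12' : al * be \notin M by rewrite -[X in al * X]Vbe.
have key : forall y, y \in K d -> y ^ a d 1 = y -> y \notin M -> y * (al * be)^-1 \in M.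
  move=> y ky Hy1 ny.
  have := coset4 sMK iKM kal kbe C n1 n2 n12 n12' ky.
  have E : al * be^-1 = (y * al^-1)^-1 * (y * be^-1).
    by rewrite invMg invgK -mulgA (mulgA y^-1) mulVg mul1g.
  case => H; [by move/negP: ny | | | done].
  - have := conjB _ _ _ G1 H; rewrite Hy1 Hal1 => H'.
    by exfalso; move/negP: n12; apply; rewrite E groupM // groupV.
  - have := conjB _ _ _ G1 H; rewrite Hy1 Hbe1 => H'.
    by exfalso; move/negP: n12; apply; rewrite E groupM // groupV.
have nga : ga \notin M.
  apply/negP => H; move/negP: n1; apply; rewrite -Hga0; exact: HN.
have nde : de \notin M.
  apply/negP => H; move/negP: n2; apply; rewrite -Hde0; exact: HN.
have Hg := key ga kga Hga1 nga.
have Hd' := key de kde Hde1 nde.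
have : ga * de^-1 \in M.
  move: Hg Hd'; set X := (al * be)^-1 => Hg Hd'.
  by have := groupM Hg (groupVr Hd'); rewrite invMg -mulgA mulKVg.
move/(conjB _ _ _ G0); rewrite Hga0 Hde0.
by move/negP: n12.
Qed.

Close Scope group_scope.

Open Scope group_scope.

Lemma K_norm d (g x : {perm W d}) : g \in Gd d -> x \in K d -> x ^ g \in K d.
Proof.
move=> Hg /inK [Hx Hfix]; apply/inK; split; first by rewrite groupJ.
move=> w Hw; rewrite conjgE !gactM Hfix ?gactVK //.
by rewrite Gd_size // groupV.
Qed.

Lemma K_comm d (x y : {perm W d}) : 0 < d -> x \in K d -> y \in K d -> x ^ y = x.
Proof.
move=> Hd Hx Hy; have Hab := K_abelian Hd.
have /centP C : y \in 'C(K d) by apply: (subsetP Hab).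
by rewrite conjgE -(C x Hx) mulKg.
Qed.

Lemma Gd_normK d : 0 < d -> Gd d \subset 'N(K d).
Proof.
move=> Hd; apply/subsetP => g Hg; rewrite inE; apply/subsetP => y.
rewrite mem_conjg => H; rewrite -(conjgKV g y).
by apply: K_norm.
Qed.

Lemma restr_exists d (g : {perm W d}) : g \in Gd d ->
  exists2 h : {perm W d.-1}, h \in Gd d.-1 & forall v, size v <= d.-1 -> gact h v = gact g v.
Proof.
move=> Hg.
pose f := fun x : W d.-1 => mkW d.-1 (gact g (ssval x)).
have Hf : forall x, ssval (f x) = gact g (ssval x).
  move=> x; rewrite /f mkWK // Gd_size //; exact: inW.
have finj : injective f.
  move=> x y E; apply: val_inj; apply: (@gact_inj d g).
  by rewrite -!Hf E.
have hE : forall v, size v <= d.-1 -> gact (perm finj) v = gact g v.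
  move=> v Hv; have [x [<- ->]] := gact_in (perm finj) Hv.
  by rewrite permE Hf.
exists (perm finj) => //.
apply/inGd => w Hw; split; first by rewrite hE // Gd_size.
rewrite hE; last by rewrite size_parent; lia.
rewrite hE // Gd_parent //; lia.
Qed.

Lemma group_set_M0 d : group_set (M0 d).
Proof. by rewrite /M0; apply: groupP. Qed.
Canonical M0_group d := Group (group_set_M0 d).

Lemma PK d (P : {group {perm W d}}) : P \subset Gd d -> full_restr P -> Gd d \subset P * K d.
Proof.
move=> sPG Hfull; apply/subsetP => g Hg.
have [h Hh hE] := restr_exists Hg.
have [q Hq qE] := Hfull h Hh.
have qG : q \in Gd d by apply: (subsetP sPG).
have -> : g = q * (q^-1 * g) by rewrite mulKVg.
apply: mem_mulg => //; apply/inK; split; first by rewrite groupM // groupV.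
move=> w Hw; rewrite gactM.
have Hv : size (gact q^-1 w) <= d.-1 by rewrite Gd_size ?groupV //; lia.
by rewrite -hE // -qE // gactVK.
Qed.

Close Scope group_scope.

Lemma commg_alt (gT : finGroupType) (x y : gT) : [~ x, y]%g = (y^-1 ^ x * y)%g.
Proof. by rewrite commgEl !conjgE !mulgA. Qed.

Lemma z_vals d : 2 <= d ->
  [/\ z d 0 = 1%g, z d 1 = t d (e0 d), z d 2 = t d (e1 d) & z d 3 = (t d (e1 d) * t d (e0 d))%g].
Proof.
move=> Hd; have Hd0 : 0 < d by lia.
have Ha := a_last Hd0.
split => //=; rewrite Ha //.
- by rewrite tJa ?size_e0 // aswap0_e0.
- by rewrite commg_alt t_V tJa ?size_e0 // aswap0_e0.
Qed.

Lemma zK d (n : nat) : 2 <= d -> n < 4 -> z d n \in K d.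
Proof.
move=> Hd; have Hd0 : 0 < d by lia.
have [z0 z1 z2 z3] := z_vals Hd.
case: n => [|[|[|[|n]]]] Hn //.
- by rewrite z0 group1.
- by rewrite z1 t_K ?size_e0.
- by rewrite z2 t_K ?size_e1.
- by rewrite z3 groupM // t_K ?size_e0 ?size_e1.
Qed.

Open Scope group_scope.

Theorem mainTheorem10 (d : nat) (P : {group {perm W d}}) :
  2 <= d ->
  P \subset Gd d ->
  essential P ->
  full_restr P ->
  (#|Gd d : P|)%g = 4 ->
  exists k : 'I_d.-1 -> 'I_4,
    (P : {set {perm W d}}) =
    <<[set (a d i * z d (k i))%g | i : 'I_d.-1] :|: [set [~ a d 1, a d d.-1]]>>%g.
Proof.
move=> Hd sPG _ Hfull Hidx.
have Hd0 : 0 < d by lia.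
have [z0 z1 z2 z3] := z_vals Hd.
set al := t d (e0 d); set ga := t d (e1 d).
have Ec : [~ a d 1, a d d.-1] = t d (FF d) * al.
  by rewrite commg_alt a_last // t_V tJa ?size_e0.
have sKG := K_Gd d.
have PKG : P * K d = Gd d.
  by apply/eqP; rewrite eqEsubset PK // mul_subG.
have cardK : #|K d| = (4 * #|K d :&: P|)%N.
  have L := Lagrange sPG; rewrite Hidx in L.
  have MC := mul_cardG P (K d); rewrite PKG -L setIC in MC.
  apply/eqP; rewrite -(eqn_pmul2l (cardG_gt0 P)) MC.
  by rewrite mulnA.
have sMK : (K d :&: P)%G \subset K d by apply: subsetIl.
have iKM : #|K d : (K d :&: P)%G| = 4.
  have L := Lagrange sMK; rewrite cardK /= in L.
  by apply/eqP; rewrite -(eqn_pmul2l (cardG_gt0 (K d :&: P)%G)) L mulnC.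
have HNM : forall g x, g \in Gd d -> x \in (K d :&: P)%G -> x ^ g \in (K d :&: P)%G.
  move=> g x; rewrite -PKG => /mulsgP [p k Hp Hk ->]; rewrite inE => /andP [xK xP].
  have pG : p \in Gd d by apply: (subsetP sPG).
  have xpK : x ^ p \in K d by apply: K_norm.
  by rewrite conjgM K_comm // inE xpK groupJ.
have cM := c_in_M Hd sMK iKM HNM.
have M0M := M0_sub Hd HNM cM.
have M0K : M0 d \subset K d := subset_trans M0M sMK.
have abK := K_abelian Hd0.
have alK : al \in K d by apply: t_K; rewrite ?size_e0.
have gaK : ga \in K d by apply: t_K; rewrite ?size_e1.
have commB : commute <[al]> <[ga]>.
  by apply: centC; apply: (sub_abelian_cent2 abK); rewrite cycle_subG.
set B := (<[al]> <*> <[ga]>)%G.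
have sBK : B \subset K d by rewrite join_subG !cycle_subG alK gaK.
have cardB : #|B| <= 4.
  apply: leq_trans (card_join_le commB) _.
  have -> : 4 = (2 * 2)%N by [].
  by apply: leq_mul; apply: card_cyc2; apply: t_inv.
have commN : commute (M0 d) B by apply: centC; apply: (sub_abelian_cent2 abK).
set N := (M0_group d <*> B)%G.
have alN : al \in N.
  by apply: (subsetP (joing_subr _ _)); apply: (subsetP (joing_subl _ _)); apply: cycle_id.
have gaN : ga \in N.
  by apply: (subsetP (joing_subr _ _)); apply: (subsetP (joing_subr _ _)); apply: cycle_id.
have KN : K d \subset N.
  apply: subset_trans (K_T Hd0) _; rewrite gen_subG; apply/subsetP => x /imsetP [y].
  rewrite inE => /eqP Hy ->.
  have inM0 : forall s, s \in M0 d -> s \in N by move=> s Hs; apply: (subsetP (joing_subl _ _)).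
  case Hb: (nth false (ssval y) 0).
  - have -> : t d (ssval y) = ga * (ga * t d (ssval y)) by rewrite mulgA t_inv mul1g.
    rewrite groupM // inM0 //; apply: mem_gen; rewrite inE; apply/orP; right.
    by apply/imsetP; exists y => //; rewrite inE Hy Hb !eqxx.
  - have -> : t d (ssval y) = al * (al * t d (ssval y)) by rewrite mulgA t_inv mul1g.
    rewrite groupM // inM0 //; apply: mem_gen; rewrite inE; apply/orP; left.
    by apply/imsetP; exists y => //; rewrite inE Hy Hb !eqxx.
have cardN : #|N| <= (#|M0 d| * 4)%N.
  apply: leq_trans (card_join_le commN) _.
  by rewrite leq_mul2l cardB orbT.
have MeqM0 : M0 d = (K d :&: P)%G.
  apply/eqP; rewrite eqEcard M0M /=.
  have H := leq_trans (subset_leq_card KN) cardN.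
  by rewrite cardK mulnC leq_pmul2r in H.
have Hk : forall i : 'I_d.-1, exists j : 'I_4, a d i * z d j \in P.
  move=> i; have aG : a d i \in Gd d by apply: a_Gd.
  rewrite -PKG in aG; case/mulsgP: aG => p k0 Hp Hk0 E.
  have : k0^-1 \in N by apply: (subsetP KN); rewrite groupV.
  rewrite /N /= comm_joingE // => /mulsgP [m b Hm Hb Ekb].
  have mK : m \in K d by apply: (subsetP M0K).
  have bK : b \in K d by apply: (subsetP sBK).
  have Hab : a d i * b \in P.
    have -> : a d i * b = p * m^-1.
      have -> : p = a d i * k0^-1 by rewrite E mulgK.
      rewrite Ekb -mulgA.
      have -> : m * b = b * m.
        have /centP C : b \in 'C(K d) by apply: (subsetP abK).
        by rewrite (C m mK).
      by rewrite mulgK.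
    rewrite groupM // groupV.
    by have := subsetP M0M m Hm; rewrite inE => /andP [].
  move: Hb; rewrite /B /= comm_joingE // => /mulsgP [b0 b1 Hb0 Hb1 Eb].
  rewrite Eb in Hab.
  case: (cyc2 (t_inv d (e0 d)) Hb0) => Eb0; case: (cyc2 (t_inv d (e1 d)) Hb1) => Eb1.
  - by exists (@Ordinal 4 0 isT); change (a d i * z d 0 \in P); rewrite z0; move: Hab; rewrite Eb0 Eb1 !mulg1.
  - by exists (@Ordinal 4 2 isT); change (a d i * z d 2 \in P); rewrite z2; move: Hab; rewrite Eb0 Eb1 mul1g.
  - by exists (@Ordinal 4 1 isT); change (a d i * z d 1 \in P); rewrite z1; move: Hab; rewrite Eb0 Eb1 mulg1.
  - exists (@Ordinal 4 3 isT); change (a d i * z d 3 \in P); rewrite z3; move: Hab; rewrite Eb0 Eb1.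
    by rewrite t_comm ?size_e0 ?size_e1.
pose k := fun i : 'I_d.-1 => odflt ord0 [pick j : 'I_4 | a d i * z d j \in P].
have kP : forall i : 'I_d.-1, a d i * z d (k i) \in P.
  move=> i; rewrite /k; case: pickP => [j Hj //|Hn].
  by have [j Hj] := Hk i; move: (Hn j); rewrite Hj.
exists k.
set S := [set a d i * z d (k i) | i : 'I_d.-1] :|: [set [~ a d 1, a d d.-1]].
have cP : [~ a d 1, a d d.-1] \in P.
  by rewrite Ec; move: cM; rewrite inE => /andP [].
have HP : <<S>> \subset P.
  rewrite gen_subG; apply/subsetP => x; rewrite inE => /orP [/imsetP [i _ ->]|]; first exact: kP.
  by rewrite ?inE => /eqP ->.
have commHK : commute <<S>> (K d).
  by apply: normC; apply: subset_trans (Gd_normK Hd0); apply: subset_trans sPG.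
have GHK : Gd d \subset <<S>> * K d.
  rewrite -comm_joingE //; apply: subset_trans (gen_Gd d) _.
  rewrite gen_subG; apply/subsetP => x /imsetP [i _ ->].
  case: (ltnP i d.-1) => Hi.
  - set j := Ordinal Hi.
    have -> : a d i = (a d j * z d (k j)) * (z d (k j))^-1 by rewrite mulgK.
    rewrite groupM //.
      apply: (subsetP (joing_subl _ _)); apply: mem_gen; rewrite inE; apply/orP; left.
      by apply/imsetP; exists j.
    by rewrite groupV; apply: (subsetP (joing_subr _ _)); apply: zK.
  - have -> : (i : nat) = d.-1.
      by apply/eqP; rewrite eqn_leq Hi andbT -ltnS prednK.
    by rewrite a_last //; apply: (subsetP (joing_subr _ _)).
have HNH : forall g x, g \in Gd d -> x \in (<<S>> :&: K d)%G -> x ^ g \in (<<S>> :&: K d)%G.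
  move=> g x /(subsetP GHK) /mulsgP [h k1 Hh Hk1 ->]; rewrite inE => /andP [xH xK].
  have hG : h \in Gd d by apply: (subsetP sPG); apply: (subsetP HP).
  have xhK : x ^ h \in K d by apply: K_norm.
  by rewrite conjgM K_comm // inE xhK groupJ.
have cH : t d (FF d) * t d (e0 d) \in (<<S>> :&: K d)%G.
  rewrite inE -/al -Ec; apply/andP; split.
    by apply: mem_gen; rewrite inE; apply/orP; right; rewrite inE.
  by rewrite Ec; move: cM; rewrite inE => /andP [].
have M0H := M0_sub Hd HNH cH.
apply/eqP; rewrite eqEsubset HP andbT.
apply/subsetP => p Hp.
have : p \in <<S>> * K d by apply: (subsetP GHK); apply: (subsetP sPG).
case/mulsgP => h k1 Hh Hk1 Ep.
have hP : h \in P by apply: (subsetP HP).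
have k1P : k1 \in P.
  have -> : k1 = h^-1 * p by rewrite Ep mulKg.
  by rewrite groupM // groupV.
have k1M : k1 \in M0 d by rewrite MeqM0 inE Hk1 k1P.
have := subsetP M0H k1 k1M; rewrite inE => /andP [k1S _].
by rewrite Ep groupM.
Qed.
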